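(* Let $\mu>0$, $\sigma\ge0$ and $r=\sigma/\mu$. Then the robust approximation ratio for selling a single item satisfies \[\mathrm{APX}(\mu,\sigma)=\inf_{A}\sup_{F\in\mathbb{F}_{\mu,\sigma}}\frac{\mathrm{OPT}(F)}{\mathrm{REV}(A;F)}\ \ge\ 1+\ln(1+r^2),\] where the infimum is over all probability distributions $A$ over nonnegative prices.
   Context: A nonnegative real random variable is $(\mu,\sigma)$-distributed if its expectation is $\mu$ and its standard deviation is at most $\sigma$; $\mathbb{F}_{\mu,\sigma}$ is the class of such distributions. Single item, single buyer with value $X\sim F$. A (possibly randomized) truthful mechanism is identified with a probability distribution $A$ over prices $p\ge0$: a price $p\sim A$ is drawn and the buyer buys iff $X\ge p$. $\mathrm{REV}(p;F)=p\Pr[X\ge p]$, $\mathrm{REV}(A;F)=\mathbb{E}_{p\sim A}[\mathrm{REV}(p;F)]$, $\mathrm{OPT}(F)=\sup_{p\ge0}\mathrm{REV}(p;F)$ (the optimal revenue over all truthful mechanisms). Ratios with zero denominator are interpreted as $+\infty$. *)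

(* Defs.v *)
From HB Require Import structures.
From mathcomp Require Import all_boot all_order all_algebra.
From mathcomp Require Import all_classical all_reals all_analysis.
Set Implicit Arguments. Unset Strict Implicit. Unset Printing Implicit Defensive.
Import Order.TTheory GRing.Theory Num.Theory.
Local Open Scope classical_set_scope.
Local Open Scope ring_scope.
Local Open Scope ereal_scope.

Section robust.
Variable R : realType.

Definition nonneg_dist (F : probability R R) : Prop :=
  F [set x : R | (x < 0)%R] = 0.

Definition Fclass (mu sigma : R) : set (probability R R) :=
  [set F | nonneg_dist F /\ 'E_F[idfun] = mu%:E /\
           'V_F[idfun] <= (sigma ^+ 2)%:E].

Definition REVp (p : R) (F : probability R R) : \bar R :=
  p%:E * F `[p, +oo[%classic.

Definition REV (A F : probability R R) : \bar R :=
  \int[A]_p REVp p F.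

Definition OPT (F : probability R R) : \bar R :=
  ereal_sup [set REVp p F | p in [set p : R | (0 <= p)%R]].

(* ratio with the convention x/0 = +oo; for the quantities used below
   (OPT(F), REV(A;F) in [0, mu]) both arguments are finite reals. *)
Definition ratio (a b : \bar R) : \bar R :=
  if b == 0 then +oo else (fine a / fine b)%:E.

Definition APX (mu sigma : R) : \bar R :=
  ereal_inf [set ereal_sup [set ratio (OPT F) (REV A F) | F in Fclass mu sigma]
            | A in [set A : probability R R | nonneg_dist A]].

End robust.

(* Main.v *)
Require Import Defs.
From HB Require Import structures.
From mathcomp Require Import all_boot all_order all_algebra.
From mathcomp Require Import all_classical all_reals all_analysis.
From mathcomp Require Import measurable_realfun lra ring.
Set Implicit Arguments. Unset Strict Implicit. Unset Printing Implicit Defensive.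
Import Order.TTheory GRing.Theory Num.Theory.
Local Open Scope classical_set_scope.
Local Open Scope ring_scope.

Lemma maxN0 (R : realType) (a : R) : Num.max a 0 - Num.max (- a) 0 = a.
Proof.
rewrite /Num.max; case: (ltrP a 0) => h1; case: (ltrP (-a) 0) => h2; lra.
Qed.

Section twopt.
Variable R : realType.
Variables (v q : R) (q0 : 0 <= q) (q1 : q <= 1).
Let q1' : 0 <= 1 - q. Proof. by rewrite subr_ge0. Qed.

Definition twopt : set R -> \bar R :=
  measure_add (mscale (NngNum q0) (@dirac _ R v R))
              (mscale (NngNum q1') (@dirac _ R 0 R)).
HB.instance Definition _ := Measure.on twopt.
Lemma twoptE S : twopt S = (q * \1_S v + (1 - q) * \1_S 0)%:E.
Proof. rewrite /twopt measure_addE; rewrite /mscale /dirac /=. rewrite EFinD !EFinM; reflexivity. Qed.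
Let twopt_setT : twopt setT = 1%E.
Proof. by rewrite twoptE !indicT !mulr1 addrC subrK. Qed.
HB.instance Definition _ := Measure_isProbability.Build _ _ _ twopt twopt_setT.

Local Open Scope ereal_scope.
Lemma twopt_integral (g : R -> R) : measurable_fun setT g ->
  (\int[twopt]_x (g x)%:E = (q * g v + (1 - q) * g 0)%:E)%E.
Proof.
move=> mg.
have mG : measurable_fun [set: R] (EFin \o g) by exact/measurable_EFinP.
rewrite integralE.
rewrite /twopt !ge0_integral_measure_add //; last 2 first.
- exact: measurable_funeneg.
- exact: measurable_funepos.
rewrite !ge0_integral_mscale //; try exact: measurable_funeneg; try exact: measurable_funepos.
rewrite !integral_dirac //; try exact: measurable_funeneg; try exact: measurable_funepos.
rewrite !diracT !mul1e /= !funeposE !funenegE /= -!EFin_max -!EFinM -!EFinD.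
congr EFin.
rewrite -[in RHS](maxN0 (g v)) -[in RHS](maxN0 (g 0%R)); ring.
Qed.
End twopt.

Section class.
Variable R : realType.
Variables (mu sigma v : R) (mu0 : 0 < mu) (v1 : mu <= v) (v2 : v <= mu + sigma ^+ 2 / mu).
Variables (q0 : 0 <= mu / v) (q1 : mu / v <= 1).
Let v0 : 0 < v. Proof. exact: lt_le_trans v1. Qed.

Lemma twopt_class : Fclass mu sigma (@twopt R v (mu / v) q0 q1).
Proof.
split; [|split].
- rewrite /nonneg_dist /= twoptE !indicE !memNset /=; first by rewrite !mulr0 addr0.
  + by rewrite ltxx.
  + by rewrite ltNge ltW.
- rewrite unlock twopt_integral ?/=; last exact: measurable_id; rewrite ?/= /=.
  by rewrite mulr0 addr0 mulfVK // gt_eqF.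
- rewrite /variance unlock /=.
  have -> : ('E_(@twopt R v (mu / v) q0 q1)[idfun] = mu%:E)%E.
    by rewrite unlock twopt_integral ?/=; last exact: measurable_id; rewrite ?/= /= mulr0 addr0 mulfVK // gt_eqF.
  rewrite unlock twopt_integral /=; last first.
    by apply: measurable_funM; apply: measurable_funB => //; exact: measurable_id.
  rewrite lee_fin.
  have vne : v != 0 by rewrite gt_eqF.
  have -> : mu / v * ((v - mu) * (v - mu)) + (1 - mu / v) * ((0 - mu) * (0 - mu)) = mu * v - mu ^+ 2.
    by field.
  have : mu * v <= mu * (mu + sigma ^+ 2 / mu) by rewrite ler_pM2l.
  rewrite mulrDr mulrCA mulfV ?gt_eqF // mulr1; lra.
Qed.
End class.

Section opt.
Variable R : realType.
Variables (mu v : R) (mu0 : 0 < mu) (v1 : mu <= v).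
Variables (q0 : 0 <= mu / v) (q1 : mu / v <= 1).
Let v0 : 0 < v. Proof. exact: lt_le_trans v1. Qed.

Lemma twopt_OPT : OPT (@twopt R v (mu / v) q0 q1) = mu%:E.
Proof.
have vne : v != 0 by rewrite gt_eqF.
apply/eqP; rewrite eq_le; apply/andP; split.
- apply: ub_ereal_sup => _ [p /= p0 <-].
  rewrite /REVp /= twoptE -EFinM lee_fin !indicE !mem_setE !in_itv /= !andbT.
  have [pv|pv] := leP p v; have [pz|pz] := leP p 0%R => /=.
  + have -> : p = 0 by apply/le_anti; rewrite pz p0.
    by rewrite mul0r ltW.
  + by rewrite mulr1 mulr0 addr0 mulrA ler_pdivrMr // mulrC ler_pM2l.
  + by have := lt_le_trans (lt_trans v0 pv) pz; rewrite ltxx.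
  + by rewrite !mulr0 addr0 mulr0 ltW.
- apply: ereal_sup_ubound; exists v => /=; first exact: ltW.
  rewrite /REVp /= twoptE -EFinM !indicE !mem_setE !in_itv /= !andbT lexx.
  rewrite (leNgt v 0) v0 /= mulr1 mulr0 addr0 mulrC mulfVK //.
Qed.
End opt.

Section rev.
Variable R : realType.
Variables (v q : R) (v0 : 0 < v).
Variables (q0 : 0 <= q) (q1 : q <= 1).
Local Open Scope ereal_scope.

Lemma twopt_REV (A : probability R R) : nonneg_dist A ->
  REV A (@twopt R v q q0 q1) = q%:E * \int[A]_x (x * \1_`]0%R, v] x)%:E.
Proof.
move=> A0.
pose h x := (x * (q * \1_`]-oo, v] x + (1 - q) * \1_`]-oo, 0%R] x))%R.
have -> : REV A (@twopt R v q q0 q1) = \int[A]_x (h x)%:E.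
  rewrite /REV; apply: eq_integral => x _.
  rewrite /REVp /= twoptE -EFinM /h !indicE !mem_setE !in_itv /= ?andbT //.
have mh : measurable_fun [set: R] h.
  apply: measurable_funM; first exact: measurable_id.
  by apply: measurable_funD; apply: measurable_funM => //; exact: measurable_indic.
rewrite (ae_eq_integral (fun x : R => q%:E * (x * \1_`]0%R, v] x)%:E)) //; last 3 first.
- exact/measurable_EFinP.
- apply: measurable_funeM; apply/measurable_EFinP.
  apply: measurable_funM; first exact: measurable_id.
  exact: measurable_indic.
- exists [set x | (x < 0)%R]; split.
  + rewrite (_ : [set x | (x < 0)%R] = `]-oo, 0%R[%classic); first exact: measurable_itv.
    by apply/seteqP; split => x; rewrite /= in_itv /=.
  + exact: A0.
  + move=> x /= hx; rewrite ltNge; apply/negP => x0; apply: hx => _.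
    congr EFin; rewrite /h !indicE !mem_setE !in_itv /= ?andbT.
    have [xz|xz] := leP x 0%R.
      have -> : x = 0%R by apply/le_anti; rewrite xz x0.
      by rewrite !mul0r mulr0.
    by rewrite /= mulr0 addr0 mulrCA.
rewrite ge0_integralZl //.
- apply/measurable_EFinP; apply: measurable_funM; first exact: measurable_id.
  exact: measurable_indic.
- move=> x _; rewrite lee_fin indicE mem_setE in_itv /=.
  by case: (boolP (0 < x)%R) => //= x0; [rewrite mulr_ge0 // ltW | rewrite mulr0].
Qed.
End rev.

Section weights.
Variable R : realType.
Variables (v : nat -> R) (n : nat).
Hypothesis vpos : forall k, 0 < v k.
Hypothesis vmono : forall i j, (i <= j)%N -> v i <= v j.

Definition wt (k : nat) : R := if (k < n)%N then (v k)^-1 - (v k.+1)^-1 else (v n)^-1.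

Lemma wt_ge0 k : 0 <= wt k.
Proof.
rewrite /wt; case: ifP => _; last by rewrite invr_ge0 ltW.
by rewrite subr_ge0 lef_pV2 ?posrE // vmono.
Qed.

Lemma wt_tele d m : (m + d = n)%N -> \sum_(m <= k < n.+1) wt k = (v m)^-1.
Proof.
elim: d m => [|d IH] m hm.
  by rewrite addn0 in hm; subst m; rewrite big_nat1 /wt ltnn.
rewrite big_ltn; last by rewrite ltnS -hm leq_addr.
rewrite (IH m.+1); last by rewrite addSnnS.
rewrite /wt ifT; last by rewrite -hm addnS ltnS leq_addr.
by rewrite subrK.
Qed.

Lemma wt_point d m x : (m + d = n)%N ->
  \sum_(m <= k < n.+1) wt k * (x * \1_`]0, v k] x) <= 1.
Proof.
elim: d m => [|d IH] m hm.
  rewrite addn0 in hm; subst m; rewrite big_nat1 /wt ltnn indicE mem_setE in_itv /=.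
  have [/andP[x0 xv]|_] := boolP ((0 < x) && (x <= v n)); last by rewrite !mulr0.
  by rewrite mulr1 mulrC ler_pdivrMr // mul1r.
have mn : (m < n)%N by rewrite -hm addnS ltnS leq_addr.
have [/andP[x0 xv]|hx] := boolP ((0 < x) && (x <= v m)).
  rewrite (eq_big_nat _ _ (F2 := fun k => wt k * x)); last first.
    move=> i /andP[mi _]; rewrite indicE mem_setE in_itv /= x0 /=.
    by rewrite (le_trans xv (vmono mi)) mulr1.
  rewrite -mulr_suml (wt_tele (d := d.+1)) // mulrC ler_pdivrMr // mul1r //.
rewrite big_ltn; last by rewrite ltnS ltnW.
rewrite indicE mem_setE in_itv /= (negbTE hx) mulr0 mulr0 add0r (IH m.+1) //.
by rewrite addSnnS.
Qed.
End weights.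

Section integrals.
Variable R : realType.
Variable A : probability R R.
Local Open Scope ereal_scope.

Lemma mind (v : R) : measurable_fun [set: R] (fun x : R => (x * \1_`]0%R, v] x)%:E).
Proof.
apply/measurable_EFinP; apply: measurable_funM; first exact: measurable_id.
exact: measurable_indic.
Qed.

Lemma ind_ge0 (v x : R) : (0 <= x * \1_`]0%R, v] x)%R.
Proof.
rewrite indicE mem_setE in_itv /=.
by case: (boolP (0 < x)%R) => //= x0; [rewrite mulr_ge0 // ltW | rewrite mulr0].
Qed.

Lemma intU (v : R) : (0 <= v)%R ->
  \int[A]_x (x * \1_`]0%R, v] x)%:E = (fine (\int[A]_x (x * \1_`]0%R, v] x)%:E))%:E /\
  (0 <= fine (\int[A]_x (x * \1_`]0%R, v] x)%:E) <= v)%R.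
Proof.
move=> v0.
have I0 : 0 <= \int[A]_x (x * \1_`]0%R, v] x)%:E.
  by apply: integral_ge0 => x _; rewrite lee_fin ind_ge0.
have Iv : \int[A]_x (x * \1_`]0%R, v] x)%:E <= v%:E.
  apply: (le_trans (ge0_le_integral _ _ _ (mind v) (measurable_cst (v%:E)) _)) => //.
  - by move=> x _; rewrite lee_fin ind_ge0.
  - move=> x _; rewrite lee_fin indicE mem_setE in_itv /=.
    by case: (boolP ((0 < x)%R && (x <= v)%R)) => /= [/andP[_ xv]|_]; rewrite ?mulr1 ?mulr0.
  - rewrite integral_cst //; set a := (X in (_ * X)%E); have -> : a = 1 by exact: probability_setT.
    by rewrite mule1.
move: I0 Iv; case: (\int[A]_x (x * \1_`]0%R, v] x)%:E) => [r| |] //= r0 rv.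
by split => //; rewrite -!lee_fin r0 rv.
Qed.

Lemma sum_le1 (v : nat -> R) (n : nat) (vpos : forall k, (0 < v k)%R)
  (vmono : forall i j, (i <= j)%N -> (v i <= v j)%R) (U : nat -> R)
  (hU : forall k, \int[A]_x (x * \1_`]0%R, v k] x)%:E = (U k)%:E) :
  (\sum_(0 <= k < n.+1) wt v n k * U k <= 1)%R.
Proof.
rewrite -lee_fin -sumEFin.
rewrite (eq_bigr (fun k => \int[A]_x ((wt v n k * (x * \1_`]0%R, v k] x))%:E))); last first.
  move=> k _; rewrite EFinM -hU -ge0_integralZl //; first exact: mind.
    by move=> x _; rewrite lee_fin ind_ge0.
  by rewrite lee_fin wt_ge0.
rewrite -ge0_integral_sum //; last 2 first.
- move=> k; apply/measurable_EFinP; apply: measurable_funM; first exact: measurable_cst.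
  apply: measurable_funM; first exact: measurable_id.
  exact: measurable_indic.
- by move=> k x _; rewrite lee_fin mulr_ge0 // ?wt_ge0 // ind_ge0.
apply: (le_trans (ge0_le_integral _ _ _ _ (measurable_cst (1%E : \bar R)) _)) => //.
- by move=> x _; rewrite sumEFin lee_fin; apply: sumr_ge0 => k _; rewrite mulr_ge0 // ?wt_ge0 // ind_ge0.
- apply: emeasurable_sum => k; apply/measurable_EFinP; apply: measurable_funM; first exact: measurable_cst.
  apply: measurable_funM; first exact: measurable_id.
  exact: measurable_indic.
- move=> x _; rewrite sumEFin lee_fin /=.
  exact: (@wt_point _ v n vpos vmono n 0%N x).
- rewrite integral_cst //; set a := (X in (_ * X)%E); have -> : a = 1 by exact: probability_setT.
    by rewrite mule1.
Qed.
End integrals.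

Section geometric.
Variable R : realType.
Variables (mu sigma L : R) (n : nat).
Hypothesis mu0 : 0 < mu.
Hypothesis L0 : 0 <= L.
Hypothesis n0 : (0 < n)%N.
Hypothesis hL : mu * expR L = mu + sigma ^+ 2 / mu.

Let nne : n%:R != 0 :> R. Proof. by rewrite pnatr_eq0 -lt0n. Qed.
Definition tt : R := L / n%:R.
Let t0 : 0 <= tt. Proof. by rewrite /tt divr_ge0. Qed.
Definition vg (k : nat) : R := mu * expR (k%:R * tt).

Lemma vg_pos k : 0 < vg k. Proof. by rewrite /vg mulr_gt0 // expR_gt0. Qed.
Lemma vg_mono i j : (i <= j)%N -> vg i <= vg j.
Proof. by move=> ij; rewrite /vg ler_pM2l // ler_expR ler_wpM2r // ler_nat. Qed.
Lemma vg_ge k : mu <= vg k.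
Proof. by rewrite /vg ler_peMr ?(ltW mu0) // -[X in X <= _]expR0 ler_expR mulr_ge0. Qed.
Lemma vg_le k : (k <= n)%N -> vg k <= mu + sigma ^+ 2 / mu.
Proof.
move=> kn; rewrite -hL (le_trans (vg_mono kn)) // /vg /tt mulrCA mulfV // mulr1 //.
Qed.
Lemma q0 k : 0 <= mu / vg k. Proof. by rewrite divr_ge0 // ltW // vg_pos. Qed.
Lemma q1 k : mu / vg k <= 1. Proof. by rewrite ler_pdivrMr ?vg_pos // mul1r vg_ge. Qed.

Lemma sum_wv : \sum_(0 <= k < n.+1) wt vg n k * vg k = 1 + n%:R * (1 - expR (- tt)).
Proof.
rewrite big_nat_recr //= {2}/wt ltnn mulVf ?gt_eqF ?vg_pos // addrC; congr (_ + _).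
rewrite (eq_big_nat _ _ (F2 := fun=> 1 - expR (- tt))); last first.
  move=> i /andP[_ ilt]; rewrite /wt ilt mulrBl mulVf ?gt_eqF ?vg_pos //.
  congr (_ - _); rewrite /vg -natr1 mulrDl mul1r expRD expRN.
  have := expR_gt0 (i%:R * tt); have := expR_gt0 tt => ha hb.
  field; rewrite ?gt_eqF //.
by rewrite sumr_const_nat subn0 mulr_natl.
Qed.

Lemma c_lb : 1 + L - L ^+ 2 / n%:R <= 1 + n%:R * (1 - expR (- tt)).
Proof.
have e1 : expR (- tt) <= 1 - tt + tt ^+ 2.
  rewrite expRN (le_trans (_ : _ <= (1 + tt)^-1)) //.
    by rewrite lef_pV2 ?posrE ?expR_gt0 ?expR_ge1Dx // ltr_wpDr.
  rewrite -[X in X <= _]div1r ler_pdivrMr; last by rewrite ltr_wpDr.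
  have : 0 <= tt ^+ 3 by rewrite exprn_ge0.
  rewrite !exprS expr0; nra.
have : n%:R * (tt - tt ^+ 2) <= n%:R * (1 - expR (- tt)).
  by rewrite ler_wpM2l // ?ler0n //; lra.
have -> : n%:R * (tt - tt ^+ 2) = L - L ^+ 2 / n%:R by rewrite /tt; field.
lra.
Qed.
End geometric.

Section key.
Variable R : realType.
Variables (mu sigma L : R) (n : nat).
Hypothesis mu0 : 0 < mu.
Hypothesis L0 : 0 <= L.
Hypothesis n0 : (0 < n)%N.
Hypothesis hL : mu * expR L = mu + sigma ^+ 2 / mu.
Local Open Scope ereal_scope.

Lemma key (A : probability R R) : nonneg_dist A ->
  (1 + n%:R * (1 - expR (- tt L n))%R)%:E <=
  ereal_sup [set Defs.ratio (OPT F) (REV A F) | F in Fclass mu sigma].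
Proof.
move=> A0.
set c := (1 + n%:R * (1 - expR (- tt L n)))%R.
set S := ereal_sup _.
pose v := vg mu L n.
pose U k := fine (\int[A]_x (x * \1_`]0%R, v k] x)%:E).
have hU k : \int[A]_x (x * \1_`]0%R, v k] x)%:E = (U k)%:E.
  by case: (intU A (ltW (vg_pos L n mu0 k))).
have U0 k : (0 <= U k)%R by case: (intU A (ltW (vg_pos L n mu0 k))) => _ /andP[].
rewrite leNgt; apply/negP => Sc.
have hk k : (k <= n)%N -> (v k < c * U k)%R.
  move=> kn.
  have Fk := twopt_class mu0 (vg_ge n mu0 L0 k) (vg_le mu0 L0 n0 hL kn) (q0 L n mu0 k) (q1 n mu0 L0 k).
  have := @ereal_sup_ubound _ [set Defs.ratio (OPT F) (REV A F) | F in Fclass mu sigma] _ (ex_intro2 _ _ _ Fk erefl).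
  rewrite -/S (twopt_OPT mu0 (vg_ge n mu0 L0 k)) (twopt_REV (vg mu L n k) _ _ A0) hU -EFinM /Defs.ratio.
  case: eqP => [_ rat|h rat].
    by have := le_lt_trans rat Sc; rewrite ltNge leey.
  have := le_lt_trans rat Sc; rewrite lte_fin /=.
  have Uk0 : U k != 0%R by apply: contra_not_neq h => ->; rewrite mulr0.
  have Ukp : (0 < U k)%R by rewrite lt_neqAle eq_sym Uk0 U0.
  have vp := vg_pos L n mu0 k.
  have -> : (mu / (mu / vg mu L n k * U k) = v k / U k)%R.
    by rewrite /v; field; rewrite ?gt_eqF.
  by rewrite ltr_pdivrMr.
have : (\sum_(0 <= k < n.+1) wt v n k * v k < \sum_(0 <= k < n.+1) wt v n k * (c * U k))%R.
  rewrite big_nat_recr // [X in (_ < X)%R]big_nat_recr //=.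
  apply: ler_ltD.
    apply: ler_sum_nat => i /andP[_ ilt]; rewrite ler_wpM2l ?(wt_ge0 n (vg_pos L n mu0) (vg_mono n mu0 L0)) //.
    by rewrite ltW // hk // ltnW.
  rewrite ltr_pM2l ?hk //.
  by rewrite /wt ltnn invr_gt0 (vg_pos L n mu0).
rewrite (sum_wv L n mu0) -/c.
under eq_bigr do rewrite mulrCA.
rewrite -mulr_sumr.
have := sum_le1 n (vg_pos L n mu0) (vg_mono n mu0 L0) hU.
move=> h1 h2.
have c0 : (0 < c)%R.
  rewrite /c; have : (expR (- tt L n) <= 1)%R by rewrite -expR0 ler_expR oppr_le0 /tt divr_ge0.
  move=> e1; have : (0 <= n%:R :> R)%R by [].
  nra.
have := lt_le_trans h2 (ler_wpM2l (ltW c0) h1); rewrite mulr1 ltxx //.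
Qed.
End key.

Unset Implicit Arguments.

Theorem theorem3 (R : realType) (mu sigma : R) :
  0 < mu -> 0 <= sigma ->
  ((1 + ln (1 + (sigma / mu) ^+ 2))%:E <= APX mu sigma)%E.
Proof.
move=> mu0 s0.
rewrite /APX; apply: le_ereal_inf_tmp => _ [A A0 <-].
set L := ln (1 + (sigma / mu) ^+ 2).
have H1 : 1 <= 1 + (sigma / mu) ^+ 2 by rewrite lerDl sqr_ge0.
have L0 : 0 <= L by exact: ln_ge0.
have hL : mu * expR L = mu + sigma ^+ 2 / mu.
  rewrite /L lnK ?posrE; last by rewrite (lt_le_trans ltr01).
  by field; rewrite gt_eqF.
apply/lee_addgt0Pr => e e0.
pose n := (Num.Def.archi_bound (L ^+ 2 / e)).+1.
have n0 : (0 < n)%N by [].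
have hb := @archi_boundP _ (L ^+ 2 / e) (divr_ge0 (sqr_ge0 L) (ltW e0)).
have nl : L ^+ 2 / n%:R <= e.
  rewrite ler_pdivrMr ?ltr0n // mulrC -ler_pdivrMr //.
  by rewrite ltW // (lt_le_trans hb) // ler_nat.
apply: le_trans (leeD2r _ (key mu0 L0 n0 hL A0)).
rewrite -EFinD lee_fin.
have := c_lb L0 n0; lra.
Qed.
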